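(* For every $k\in\mathbb{N}$, every $v\in V^X$ and every $i\in\Pi$: if $\sup\{\mathrm{Cost}_i(\rho)\mid\rho\in\Lambda^k(v)\}=+\infty$, then there exists a play $\rho\in\Lambda^k(v)$ with $\mathrm{Cost}_i(\rho)=+\infty$.
   Context: Let $\mathcal{G}$ be a quantitative reachability game on an arena $G=(\Pi,V,(V_i)_{i\in\Pi},E)$ (finite player set $\Pi$, finite vertex set $V$ with $|V|\ge2$, $|\Pi|\le|V|$, partition $(V_i)$, every vertex has a successor) with targets $F_i\subseteq V$ and costs $\mathrm{Cost}_i(\rho)=$ least $k$ with $\rho_k\in F_i$ (or $+\infty$); let $v_0\in V$. Extended game: arena $X$ with vertices $V^X=V\times2^\Pi$, edges $((v,I),(v',I'))\in E^X$ iff $(v,v')\in E$ and $I'=I\cup\{i:v'\in F_i\}$, $(v,I)\in V^X_i$ iff $v\in V_i$, targets $F^X_i=\{(v,I):i\in I\}$ with corresponding reachability costs $\mathrm{Cost}_i$; $x_0=(v_0,\{i:v_0\in F_i\})$. $I(u)$ is the second component of $u$. $\mathcal{I}$ is the set of $I$ such that some $(v,I)$ is reachable from $x_0$, $N=|\mathcal{I}|$, and $J_1<\dots<J_N$ is a fixed total order of $\mathcal{I}$ extending the partial order $I<I'$ iff $I\ne I'$ and some $(v',I')$ is reachable from some $(v,I)$. $V^{\ge J_n}=\{(v,J_m):v\in V,m\ge n\}$. Labelings: for $\lambda:V^X\to\mathbb{N}\cup\{+\infty\}$, a play $\rho$ of $X$ is $\lambda$-consistent if $\mathrm{Cost}_i(\rho_{\ge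 n})\le\lambda(\rho_n)$ for all $n$ and $i$ with $\rho_n\in V^X_i$. $\lambda^0(u)=0$ if $u\in V^X_i$ and $i\in I(u)$, else $+\infty$. The update of $\lambda^k$ w.r.t. $V^{\ge J_n}$ keeps values outside $V^{\ge J_n}$ and, for $u\in V^{\ge J_n}\cap V^X_i$, sets $\lambda^{k+1}(u)=0$ if $i\in I(u)$, otherwise $1+\min_{(u,u')\in E^X}\sup\{\mathrm{Cost}_i(\rho):\rho\in\Lambda^k(u')\}$ ($1+(+\infty)=+\infty$). The sequence $(\lambda^k)$ is generated by $n_0=N$, $\lambda^{k+1}=$ update of $\lambda^k$ w.r.t. $V^{\ge J_{n_k}}$, $n_{k+1}=n_k-1$ if $\lambda^{k+1}=\lambda^k$ and $n_k>1$, else $n_{k+1}=n_k$. $\Lambda^k(v)$ denotes the set of $\lambda^k$-consistent plays of $X$ starting at $v$. *)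

(* Defs.v *)
From mathcomp Require Import all_boot.
From Stdlib Require Import ClassicalEpsilon.
Set Implicit Arguments. Unset Strict Implicit. Unset Printing Implicit Defensive.

(* N ∪ {+oo}: Some n = n, None = +oo *)
Definition natinf := option nat.

Definition le_inf (a b : natinf) : bool :=
  match a, b with
  | _, None => true
  | None, Some _ => false
  | Some x, Some y => x <= y
  end.

Definition min_inf (a b : natinf) : natinf :=
  match a, b with
  | None, _ => b
  | _, None => a
  | Some x, Some y => Some (minn x y)
  end.

Definition succ_inf (a : natinf) : natinf := omap S a.

(* least upper bound in N ∪ {+oo} of a set (exists and is unique) *)
Definition is_sup_inf (S : natinf -> Prop) (s : natinf) : Prop :=
  (forall x, S x -> le_inf x s) /\
  (forall t, (forall x, S x -> le_inf x t) -> le_inf s t).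

Definition sup_inf (S : natinf -> Prop) : natinf :=
  epsilon (inhabits None) (is_sup_inf S).

Definition first_hit (P : nat -> bool) : natinf :=
  epsilon (inhabits None)
    (fun c => match c with
              | Some k => P k /\ forall j, j < k -> ~~ P j
              | None => forall j, ~~ P j
              end).

Section ExtendedGame.
Variables (Pi V : finType) (owner : V -> Pi) (E : rel V) (F : Pi -> {set V}).

Definition VX := (V * {set Pi})%type.

Definition EX : rel VX := fun u u' =>
  E u.1 u'.1 && (u'.2 == u.2 :|: [set i | u'.1 \in F i]).

Definition x0 (v0 : V) : VX := (v0, [set i | v0 \in F i]).

Definition playX (rho : nat -> VX) : Prop := forall n, EX (rho n) (rho n.+1).

Definition suffix (rho : nat -> VX) (n : nat) : nat -> VX := fun k => rho (n + k).

Definition costX (i : Pi) (rho : nat -> VX) : natinf :=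
  first_hit (fun k => i \in (rho k).2).

Definition labeling := VX -> natinf.

Definition consistent (lam : labeling) (rho : nat -> VX) : Prop :=
  playX rho /\
  forall n i, owner (rho n).1 = i -> le_inf (costX i (suffix rho n)) (lam (rho n)).

Definition Lam (lam : labeling) (v : VX) (rho : nat -> VX) : Prop :=
  consistent lam rho /\ rho 0 = v.

Definition lambda0 : labeling := fun u =>
  if owner u.1 \in u.2 then Some 0 else None.

(* J : the fixed ordering J_1 < ... < J_N as a sequence (J_n = nth set0 J n.-1) *)
Variable J : seq {set Pi}.

Definition in_geq (n : nat) (u : VX) : bool :=
  [exists m : 'I_(size J).+1, (n <= m) && (0 < m) && (u.2 == nth set0 J (val m).-1)].

Definition sup_cost (lam : labeling) (i : Pi) (v : VX) : natinf :=
  sup_inf (fun c => exists rho, Lam lam v rho /\ costX i rho = c).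

Definition update (lam : labeling) (n : nat) : labeling := fun u =>
  if in_geq n u then
    let i := owner u.1 in
    if i \in u.2 then Some 0
    else succ_inf (\big[min_inf/None]_(u' | EX u u') sup_cost lam i u')
  else lam u.

Fixpoint lamseq (k : nat) : labeling * nat :=
  match k with
  | 0 => (lambda0, size J)
  | k.+1 =>
      let: (lam, n) := lamseq k in
      let lam' := update lam n in
      (lam', if [forall u, lam' u == lam u] && (1 < n) then n.-1 else n)
  end.

Definition lambda_k (k : nat) : labeling := (lamseq k).1.

Definition valid_order (v0 : V) : Prop :=
  uniq J /\
  (forall I, I \in J <-> exists v, connect EX (x0 v0) (v, I)) /\
  (forall I I', I \in J -> I' \in J -> I != I' ->
     (exists v v', connect EX (v, I) (v', I')) -> index I J < index I' J).

End ExtendedGame.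

(* Main.v *)
Require Import Defs.
From mathcomp Require Import all_boot.
From Stdlib Require Import ClassicalEpsilon Classical.
Set Implicit Arguments. Unset Strict Implicit. Unset Printing Implicit Defensive.

Lemma first_hit_spec (P : nat -> bool) :
  match first_hit P with
  | Some k => P k /\ forall j, j < k -> ~~ P j
  | None => forall j, ~~ P j
  end.
Proof.
rewrite /first_hit.
pose Q := (fun c : natinf => match c with
              | Some k => P k /\ forall j, j < k -> ~~ P j
              | None => forall j, ~~ P j
              end).
change (Q (epsilon (inhabits None) Q)); apply: epsilon_spec.
case: (classic (exists k, P k)) => [ex|nex].
  exists (Some (ex_minn ex)); case: ex_minnP => m Pm Hm; split=> // j Hj.
  apply/negP => Pj; have := Hm _ Pj; rewrite leqNgt Hj //.
exists None => j; apply/negP => Pj; apply: nex; by exists j.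
Qed.

Lemma first_hit_le (P : nat -> bool) d : P d ->
  exists d', first_hit P = Some d' /\ d' <= d.
Proof.
move=> Pd; have := first_hit_spec P; case: (first_hit P) => [k [Pk Hk]|H].
  exists k; split=> //; rewrite leqNgt; apply/negP => /Hk; by rewrite Pd.
by have := H d; rewrite Pd.
Qed.

Section Main.
Variables (Pi V : finType) (owner : V -> Pi) (E : rel V) (F : Pi -> {set V}).
Variables (lam : labeling Pi V) (v : VX Pi V) (i : Pi).

Definition Good (p : seq (VX Pi V)) : Prop :=
  forall m, exists rho, Lam owner E F lam v rho /\
    (forall j, j < m -> i \notin (rho j).2) /\
    (forall j, j < size p -> rho j = nth v p j).

Lemma good_step p : Good p -> exists x, Good (rcons p x).
Proof.
move=> Gp; apply: NNPP => nex.
have H : forall x, exists m, ~ (exists rho, Lam owner E F lam v rho /\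
    (forall j, j < m -> i \notin (rho j).2) /\
    (forall j, j < size (rcons p x) -> rho j = nth v (rcons p x) j)).
  move=> x; apply: NNPP => H; apply: nex; exists x => m.
  apply: NNPP => H2; apply: H; by exists m.
have [f Hf] := choice _ H.
have [rho [Lr [Cr Pr]]] := Gp (\sum_(x : VX Pi V) f x).
apply: (Hf (rho (size p))); exists rho; split=> //; split.
  move=> j Hj; apply: Cr; apply: leq_trans Hj _.
  by rewrite (bigD1 (rho (size p))) //= leq_addr.
move=> j; rewrite size_rcons ltnS leq_eqVlt => /orP [/eqP ->|Hj].
  by rewrite nth_rcons ltnn eqxx.
by rewrite nth_rcons Hj Pr.
Qed.

Definition step (p : seq (VX Pi V)) : VX Pi V :=
  epsilon (inhabits v) (fun x => Good (rcons p x)).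

Fixpoint pref (n : nat) : seq (VX Pi V) :=
  if n is n'.+1 then rcons (pref n') (step (pref n')) else [::].

Lemma size_pref n : size (pref n) = n.
Proof. by elim: n => //= n IH; rewrite size_rcons IH. Qed.

Lemma good_pref n : Good [::] -> Good (pref n).
Proof.
move=> G0; elim: n => //= n IH.
rewrite /step; apply: (epsilon_spec (inhabits v) (fun x => Good (rcons (pref n) x))).
exact: good_step.
Qed.

Definition rstar (n : nat) : VX Pi V := step (pref n).

Lemma nth_pref n j : j < n -> nth v (pref n) j = rstar j.
Proof.
elim: n => // n IH; rewrite ltnS leq_eqVlt => /orP [/eqP ->|Hj] /=.
  by rewrite nth_rcons size_pref ltnn eqxx.
by rewrite nth_rcons size_pref Hj IH.
Qed.

Lemma good_agree n : Good [::] -> forall m, exists rho, Lam owner E F lam v rho /\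
    (forall j, j < m -> i \notin (rho j).2) /\ (forall j, j < n -> rho j = rstar j).
Proof.
move=> G0 m; have [rho [L [C P]]] := good_pref n G0 m.
exists rho; split=> //; split=> // j Hj.
by rewrite P ?size_pref // nth_pref.
Qed.

Lemma rstar_ok : Good [::] ->
  Lam owner E F lam v rstar /\ costX i rstar = None.
Proof.
move=> G0; split; [split; first split|].
- move=> n; have [rho [[[Pl _] _] [_ A]]] := good_agree n.+2 G0 0.
  by rewrite -!A.
- move=> n i' Ho; case Hl: (lam (rstar n)) => [c|]; last by case: costX.
  have [rho [[[Pl Cl] R0] [_ A]]] := good_agree (n + c).+1 G0 0.
  have An : rho n = rstar n by rewrite A // ltnS leq_addr.
  have := Cl n i'; rewrite An Hl => /(_ Ho).
  rewrite /costX; have := first_hit_spec (fun k => i' \in (Defs.suffix rho n k).2).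
  case: first_hit => [d [Pd _]|] //= dc.
  have Pd' : i' \in (Defs.suffix rstar n d).2.
    by move: Pd; rewrite /Defs.suffix A // ltnS leq_add2l.
  have := @first_hit_le (fun k => i' \in (Defs.suffix rstar n k).2) d Pd'; move=> [d' [Hd le]]; rewrite Hd.
  by rewrite /= (leq_trans le dc).
- have [rho [[_ R0] [_ A]]] := good_agree 1 G0 0.
  by rewrite -(A 0).
- rewrite /costX; have := first_hit_spec (fun k => i \in (rstar k).2).
  case: first_hit => [k [Pk _]|] // .
  have [rho [_ [C A]]] := good_agree k.+1 G0 k.+1.
  by move: (C k (ltnSn k)); rewrite A // Pk.
Qed.

Lemma main_gen : sup_cost owner E F lam i v = None ->
  exists rho, Lam owner E F lam v rho /\ costX i rho = None.
Proof.
move=> Hs; have G0 : Good [::].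
  move=> m; apply: NNPP => H.
  pose S := (fun c => exists rho, Lam owner E F lam v rho /\ costX i rho = c).
  have bnd : forall x, S x -> le_inf x (Some m).
    move=> x [rho [L <-]]; rewrite /costX.
    have : exists j, j < m /\ i \in (rho j).2.
      apply: NNPP => H2; apply: H; exists rho; split=> //; split=> // j Hj.
      apply/negP => Hi; apply: H2; by exists j.
    case=> j [jm Pj]; have [d' [-> le]] := @first_hit_le (fun k => i \in (rho k).2) j Pj.
    by rewrite /= (leq_trans le (ltnW jm)).
  have ex : exists n, (fun n => if excluded_middle_informative
              (forall x, S x -> le_inf x (Some n)) then true else false) n.
    exists m; by case: excluded_middle_informative.
  have sup_ex : exists s, is_sup_inf S s.
    exists (Some (ex_minn ex)); case: ex_minnP => n.
    case: excluded_middle_informative => // Hn _ Hmin; split=> // [[t|]] Ht //=.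
    apply: Hmin; by case: excluded_middle_informative.
  have := epsilon_spec (inhabits None) (is_sup_inf S) sup_ex.
  rewrite -/(sup_inf S) -/(sup_cost owner E F lam i v) Hs => [[_ H2]].
  by have := H2 _ bnd.
exists rstar; exact: rstar_ok.
Qed.

End Main.

Theorem proposition2p11 (Pi V : finType) (owner : V -> Pi) (E : rel V)
    (F : Pi -> {set V}) (v0 : V) (J : seq {set Pi}) :
  1 < #|V| -> #|Pi| <= #|V| ->
  (forall v, exists v', E v v') ->
  valid_order E F J v0 ->
  forall (k : nat) (v : VX Pi V) (i : Pi),
    sup_cost owner E F (lambda_k owner E F J k) i v = None ->
    exists rho, Lam owner E F (lambda_k owner E F J k) v rho /\ costX i rho = None.
Proof.
move=> _ _ _ _ k v i; exact: main_gen.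
Qed.
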